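(* Let $\Gamma$ be a graph and let $K$ be a finite graph. (1) If $\Gamma$ contains a finite set of vertices $X$ such that every subgraph of $\Gamma$ isomorphic to $K$ has at least one vertex in $X$, then $\Gamma$ contains a finite set of vertices $Y$, invariant under all automorphisms of $\Gamma$, such that every subgraph of $\Gamma$ isomorphic to $K$ has at least one vertex in $Y$, and $|Y|\le |X|\cdot(\text{number of vertices of }K)$. (2) If $\Gamma$ contains a finite set of edges $X$ such that every subgraph of $\Gamma$ isomorphic to $K$ has at least one edge in $X$, then $\Gamma$ contains a finite set of edges $Y$, invariant under all automorphisms of $\Gamma$, such that every subgraph of $\Gamma$ isomorphic to $K$ has at least one edge in $Y$, and $|Y|\le |X|\cdot(\text{number of edges of }K)$.
   Context: ''Graph'' may be understood in any of the usual senses (directed, undirected, or mixed; multiple edges and/or loops allowed or not), fixed throughout; isomorphisms and automorphisms preserve the corresponding structure (e.g. edge directions for directed graphs). ''Subgraph'' means an arbitrary (not necessarily induced) subgraph. $\Gamma$ may be infinite. *)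

(* Defs.v *)
From mathcomp Require Import all_boot.
From Stdlib Require List.
Set Implicit Arguments. Unset Strict Implicit. Unset Printing Implicit Defensive.

(* Convention fixed throughout: a graph is a directed multigraph with loops:
   a vertex type, an edge type, and source/target maps. *)
Record graph := Graph { gV : Type; gE : Type; gsrc : gE -> gV; gtgt : gE -> gV }.

Record fingraph := FinGraph { fV : finType; fE : finType;
                              fsrc : fE -> fV; ftgt : fE -> fV }.

Definition is_subgraph (G : graph) (VS : gV G -> Prop) (ES : gE G -> Prop) : Prop :=
  forall e, ES e -> VS (gsrc e) /\ VS (gtgt e).

Definition iso_to_subgraph (K : fingraph) (G : graph)
    (VS : gV G -> Prop) (ES : gE G -> Prop) : Prop :=
  exists (f : fV K -> gV G) (g : fE K -> gE G),
    injective f /\ (forall v, VS (f v)) /\ (forall x, VS x -> exists v, f v = x) /\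
    injective g /\ (forall e, ES (g e)) /\ (forall y, ES y -> exists e, g e = y) /\
    (forall e, gsrc (g e) = f (fsrc e) /\ gtgt (g e) = f (ftgt e)).

Definition automorphism (G : graph) (phi : gV G -> gV G) (psi : gE G -> gE G) : Prop :=
  bijective phi /\ bijective psi /\
  forall e, gsrc (psi e) = phi (gsrc e) /\ gtgt (psi e) = phi (gtgt e).

(* Finite sets are represented by duplicate-free lists; |X| = size X. *)

Definition vertex_hitting (K : fingraph) (G : graph) (X : seq (gV G)) : Prop :=
  forall VS ES, is_subgraph VS ES -> iso_to_subgraph K VS ES ->
    exists x, List.In x X /\ VS x.

Definition edge_hitting (K : fingraph) (G : graph) (X : seq (gE G)) : Prop :=
  forall VS ES, is_subgraph VS ES -> iso_to_subgraph K VS ES ->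
    exists e, List.In e X /\ ES e.

Definition vertex_aut_invariant (G : graph) (Y : seq (gV G)) : Prop :=
  forall phi psi, automorphism phi psi ->
    forall x, List.In x Y <-> List.In (phi x) Y.

Definition edge_aut_invariant (G : graph) (Y : seq (gE G)) : Prop :=
  forall phi psi, automorphism phi psi ->
    forall e, List.In e Y <-> List.In (psi e) Y.

(* Main.v *)
Require Import Defs.
From HB Require Import structures.
From mathcomp Require Import all_boot.
From Stdlib Require List.
From Stdlib Require Import ClassicalEpsilon.
Set Implicit Arguments. Unset Strict Implicit. Unset Printing Implicit Defensive.

Definition pb (Q : Prop) : bool := if excluded_middle_informative Q then true else false.
Lemma pbP Q : reflect Q (pb Q).
Proof. rewrite /pb; case: excluded_middle_informative => h; by constructor. Qed.
Lemma pb_eq Q Q' : (Q <-> Q') -> pb Q = pb Q'.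
Proof. by move=> h; apply/idP/idP => /pbP/h/pbP. Qed.

Section Main.
Variable T : eqType.

Definition trans (P : seq T -> Prop) (X : seq T) :=
  forall e, P e -> exists2 x, x \in X & x \in e.
Definition mint P M :=
  [/\ uniq M, trans P M & forall M', uniq M' -> trans P M' -> size M <= size M'].

Lemma trans_eq P X X' : X =i X' -> trans P X -> trans P X'.
Proof. move=> h t e Pe; have [x xX xe] := t e Pe; exists x => //; by rewrite -h. Qed.

Lemma fin k : forall P, (exists X, [/\ uniq X, size X <= k & trans P X]) ->
  exists L : seq T, forall M, mint P M -> {subset M <= L}.
Proof.
elim: k => [|k IH] P [X [uX sX tX]].
  exists [::] => M [uM tM mM] x xM.
  have := mM X uX tX; move: sX; rewrite leqn0 => /eqP ->.
  by rewrite leqn0 size_eq0 => /eqP M0; rewrite M0 in xM.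
have step: forall v, exists L : seq T, forall M, mint P M -> v \in M -> {subset M <= v :: L}.
  move=> v; case: (classic (exists M0, mint P M0 /\ v \in M0));
    last first.
    by move=> no; exists [::] => M mM vM; exfalso; apply: no; exists M.
  move=> [M0 [[uM0 tM0 mM0] vM0]].
  pose Pv := fun e => P e /\ v \notin e.
  have trv : forall M, uniq M -> trans P M -> trans Pv (rem v M).
    move=> M uM tM e [Pe ve]; have [x xM xe] := tM e Pe; exists x => //.
    rewrite mem_rem_uniq // inE xM andbT; apply/eqP => xv.
    by rewrite -xv xe in ve.
  have [L HL] : exists L : seq T, forall M, mint Pv M -> {subset M <= L}.
    apply: IH; exists (rem v M0); split.
    - exact: rem_uniq.
    - rewrite size_rem //; have := mM0 X uX tX; move: sX.
      case: (size M0) => //= n H1 H2; exact: leq_trans H2 H1.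
    - exact: trv.
  exists L => M [uM tM mM] vM x xM.
  have mv : mint Pv (rem v M).
    split; [exact: rem_uniq | exact: trv | ].
    move=> M' uM' tM'; rewrite size_rem //.
    case vM': (v \in M').
      have : trans P M'.
        move=> e Pe; case ve: (v \in e); first by exists v.
        by apply: tM'; split => //; rewrite ve.
      move/(mM M' uM'); case: (size M) => //= n; exact: ltnW.
    have : trans P (v :: M').
      move=> e Pe; case ve: (v \in e); first by exists v; rewrite ?mem_head.
      have [y yM ye] := tM' e (conj Pe (negbT ve)).
      by exists y; rewrite // inE yM orbT.
    by move/(mM (v :: M')); rewrite /= vM' uM' => /(_ isT); case: (size M).
  rewrite inE; case: (x =P v) => //= xv; apply: (HL _ mv x).
  rewrite mem_rem_uniq // inE xM andbT; exact/eqP.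
have gather : forall s : seq T, exists L : seq T, forall v, v \in s ->
    forall M, mint P M -> v \in M -> {subset M <= L}.
  elim=> [|v s [L HL]]; first by exists [::].
  have [Lv HLv] := step v; exists (v :: Lv ++ L) => w; rewrite inE.
  case/orP => [/eqP -> | ws] M mM wM x xM.
    by have := HLv M mM wM x xM; rewrite !inE mem_cat; case/orP => [->|->]; rewrite ?orbT.
  by rewrite inE mem_cat (HL w ws M mM wM x xM) !orbT.
case: (classic (exists e, P e)) => [[e Pe]|noe].
  have [L HL] := gather e; exists L => M mM.
  have [x xM xe] := (let: And3 _ t _ := mM in t) e Pe.
  exact: HL x xe M mM xM.
exists [::] => M [uM tM mM] x xM.
have : trans P [::] by move=> e Pe; exfalso; apply: noe; exists e.
move/(mM [::] isT); rewrite leqn0 size_eq0 => /eqP M0; by rewrite M0 in xM.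
Qed.


Lemma sum_le_const (e : seq T) (F : T -> nat) c :
  (forall x, x \in e -> F x <= c) -> \sum_(x <- e) F x <= size e * c.
Proof.
elim: e => [|a e IH] h; first by rewrite big_nil.
rewrite big_cons mulSn leq_add ?h ?mem_head // IH // => x xe.
by apply: h; rewrite inE xe orbT.
Qed.

Lemma sum_ge_const (e : seq T) (F : T -> nat) c :
  (forall x, x \in e -> c <= F x) -> size e * c <= \sum_(x <- e) F x.
Proof.
elim: e => [|a e IH] h; first by rewrite big_nil.
rewrite big_cons mulSn leq_add ?h ?mem_head // IH // => x xe.
by apply: h; rewrite inE xe orbT.
Qed.

Lemma sum_mem_count (e s : seq T) : \sum_(x <- e) (x \in s : nat) = count (mem s) e.
Proof. by elim: e => [|a e IH]; rewrite ?big_nil ?big_cons ?IH. Qed.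

Lemma main P r X : (forall e, P e -> size e <= r) -> uniq X -> trans P X ->
  exists Y, [/\ uniq Y, trans P Y, size Y <= size X * r &
    forall phi : T -> T, injective phi -> (forall s, P (map phi s) <-> P s) ->
      (exists psi, cancel psi phi) -> forall x, x \in Y <-> phi x \in Y].
Proof.
move=> Pr uX tX.
have [L HL] := fin (ex_intro _ X (And3 uX (leqnn (size X)) tX)).
pose inmin x := exists M, mint P M /\ x \in M.
pose U := undup [seq x <- L | pb (inmin x)].
have memU : forall x, x \in U <-> inmin x.
  move=> x; rewrite mem_undup mem_filter; split; first by case/andP => /pbP.
  move=> h; apply/andP; split; first exact/pbP.
  by case: h => M [mM xM]; exact: HL mM x xM.
have uU : uniq U by exact: undup_uniq.
have [M0 [uM0 tM0 mM0]] : exists M, mint P M.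
  pose Q k := pb (exists M, [/\ uniq M, trans P M & size M = k]).
  have Qex : exists k, Q k by exists (size X); apply/pbP; exists X.
  case: (ex_minnP Qex) => k /pbP [M [uM tM sM]] minQ.
  exists M; split => // M' uM' tM'; rewrite sM; apply: minQ; apply/pbP; by exists M'.
have sM0 : size M0 <= size X by exact: mM0 X uX tX.
pose n := size U.
pose tU : n.-tuple T := in_tuple U.
have tinj : injective (tnth tU).
  move=> i j; have [x0 _] : exists x0 : T, True by exists (tnth tU i).
  rewrite (tnth_nth x0 tU i) (tnth_nth x0 tU j) => h; apply: val_inj => /=.
  by apply/eqP; rewrite -(nth_uniq x0 _ _ uU) ?h // -/n ltn_ord.
pose el (S : {set 'I_n}) := [seq tnth tU i | i <- enum S].
have mem_el : forall i S, (tnth tU i \in el S) = (i \in S).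
  by move=> i S; rewrite mem_map ?mem_enum.
have el_U : forall x S, x \in el S -> x \in U.
  by move=> x S /mapP [i _ ->]; exact: mem_tnth.
have uel : forall S, uniq (el S) by move=> S; rewrite map_inj_uniq ?enum_uniq.
have sel : forall S, size (el S) = #|S| by move=> S; rewrite size_map cardE.
pose tb S := pb (trans P (el S)).
pose Mset := [set S : {set 'I_n} | tb S && [forall S' : {set 'I_n}, tb S' ==> (#|S| <= #|S'|)]].
pose S0 := [set i | tnth tU i \in M0].
have elS0 : el S0 =i M0.
  move=> x; apply/idP/idP.
    by case/mapP => i; rewrite mem_enum inE => h ->.
  move=> xM; have : x \in tU.
    by apply/(memU x); exists M0.
  by case/tnthP => i xi; rewrite xi mem_el inE -xi.
have cS0 : #|S0| = size M0.
  by rewrite -sel; apply: perm_size; apply: uniq_perm => //; exact: uel.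
have tbS0 : tb S0 by apply/pbP; apply: trans_eq tM0 => x; rewrite elS0.
have S0M : S0 \in Mset.
  rewrite inE tbS0 /=; apply/forallP => S'; apply/implyP => /pbP tS'.
  by rewrite cS0 -sel; apply: mM0.
have MX : forall S, S \in Mset -> #|S| <= size X.
  move=> S; rewrite inE => /andP [_ /forallP /(_ S0)]; rewrite tbS0 /= => h.
  by apply: leq_trans h _; rewrite cS0.
pose m := #|Mset|.
have m0 : 0 < m by apply/card_gt0P; exists S0.
pose d x := #|[set S in Mset | x \in el S]|.
have dE : forall x, d x = \sum_(S in Mset) (x \in el S : nat).
  move=> x; rewrite /d -sum1_card big_mkcond [RHS]big_mkcond /=.
  by apply: eq_bigr => S _; rewrite !inE; case: (tb S) => //=; case: [forall _, _] => //=; case: (x \in el S).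
pose Y := [seq x <- U | m <= r * d x].
exists Y; split.
- exact: filter_uniq.
- move=> e Pe; apply: NNPP => no.
  have sum1 : m <= \sum_(x <- e) d x.
    rewrite (eq_bigr _ (fun x _ => dE x)) -exchange_big /= /m -sum1_card.
    apply: leq_sum => S; rewrite inE => /andP [/pbP tS _].
    have [x xS xe] := tS e Pe.
    rewrite sum_mem_count -has_count; apply/hasP; by exists x.
  have lt : forall x, x \in e -> r * d x <= m.-1.
    move=> x xe; rewrite -ltnS prednK //.
    case xU : (x \in U); last first.
      suff -> : d x = 0 by rewrite muln0.
      apply: eq_card0 => S; rewrite !inE; apply/negP => /andP [_ /el_U].
      by rewrite xU.
    rewrite ltnNge; apply/negP => h; apply: no; exists x => //.
    by rewrite mem_filter xU h.
  have := sum_le_const lt; rewrite -big_distrr /= => h2.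
  have h3 : r * m <= r * m.-1.
    apply: leq_trans (leq_mul (leqnn r) sum1) _; apply: leq_trans h2 _.
    by rewrite leq_mul2r Pr ?orbT.
  case: (posnP r) => [r0|rpos].
    move: sum1; have := Pr e Pe; rewrite r0 leqn0 size_eq0 => /eqP ->.
    by rewrite big_nil leqn0 => /eqP m00; rewrite m00 in m0.
  by move: h3; rewrite leq_pmul2l // -ltnS prednK // ltnn.
- have h1 : size Y * m <= \sum_(x <- Y) r * d x.
    by apply: sum_ge_const => x; rewrite mem_filter => /andP [].
  have h2 : \sum_(x <- Y) r * d x <= \sum_(x <- U) r * d x.
    rewrite big_filter big_mkcond /=; apply: leq_sum => x _.
    by case: ifP.
  have h3 : \sum_(x <- U) d x = \sum_(S in Mset) #|S|.
    rewrite (eq_bigr _ (fun x _ => dE x)) exchange_big /=.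
    apply: eq_bigr => S _; rewrite sum_mem_count -size_filter -sel.
    apply: perm_size; apply: uniq_perm; [exact: filter_uniq | exact: uel |].
    move=> x; rewrite mem_filter; apply/andP/idP => [[]//|xS]; split => //.
    exact: el_U xS.
  have h4 : \sum_(S in Mset) #|S| <= m * size X.
    by rewrite -sum_nat_const; apply: leq_sum => S; exact: MX.
  rewrite -(leq_pmul2r m0); apply: leq_trans h1 _; apply: leq_trans h2 _.
  rewrite -big_distrr /= h3 (mulnC (size X)) -mulnA [size X * m]mulnC.
  by rewrite leq_mul2l h4 orbT.
- move=> phi phiI PP [psi psiK].
  have transphi : forall s, trans P (map phi s) <-> trans P s.
    move=> s; split => ts e Pe.
      have [y /mapP [a aS ->]] := ts (map phi e) (proj2 (PP e) Pe).
      by rewrite mem_map // => ae; exists a.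
    have e0 : e = map phi (map psi e) by rewrite -map_comp map_id_in // => y _ /=.
    rewrite e0 in Pe; have [a aS ae] := ts _ (proj1 (PP _) Pe).
    exists (phi a); first exact: map_f.
    by rewrite e0; exact: map_f.
  have mintphi : forall M, mint P (map phi M) <-> mint P M.
    move=> M; split => [[u t mm]|[u t mm]].
      split; [by move: u; rewrite map_inj_uniq | exact/transphi |].
      move=> M' uM' tM'; rewrite -(size_map phi) -(size_map phi M').
      by apply: mm; [rewrite map_inj_uniq | apply/transphi].
    split; [by rewrite map_inj_uniq | exact/transphi |].
    move=> M' uM' tM'.
    have e0 : M' = map phi (map psi M') by rewrite -map_comp map_id_in // => y _ /=.
    move: (map psi M') e0 => N e0; rewrite e0 in uM' tM' *; rewrite !size_map.
    by apply: mm; [exact: map_uniq uM' | apply/transphi].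
  have inminphi : forall x, inmin (phi x) <-> inmin x.
    move=> x; split => [[M [mM xM]]|[M [mM xM]]].
      have e0 : M = map phi (map psi M) by rewrite -map_comp map_id_in // => y _ /=.
      rewrite e0 in mM xM; exists (map psi M); split; first exact/mintphi.
      by rewrite mem_map in xM.
    by exists (map phi M); split; [exact/mintphi | exact: map_f].
  have Uphi : forall x, (phi x \in U) = (x \in U).
    by move=> x; apply/idP/idP => /memU h; apply/memU; apply/inminphi.
  have hs : forall i : 'I_n, index (phi (tnth tU i)) U < n.
    by move=> i; rewrite index_mem Uphi mem_tnth.
  pose sg (i : 'I_n) : 'I_n := Ordinal (hs i).
  have sgE : forall i, tnth tU (sg i) = phi (tnth tU i).
    move=> i; rewrite (tnth_nth (phi (tnth tU i))) /= nth_index //.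
    by rewrite Uphi mem_tnth.
  have sgI : injective sg.
    by move=> i j h; apply: tinj; apply: phiI; rewrite -!sgE h.
  pose F (S : {set 'I_n}) := sg @: S.
  have FI : injective F by exact: imset_inj.
  have elF : forall S, el (F S) =i map phi (el S).
    move=> S x; apply/mapP/mapP => [[j]|[y /mapP [i iS ->] ->]].
      rewrite mem_enum => /imsetP [i iS ->] ->.
      exists (tnth tU i); last by rewrite sgE.
      by apply: map_f; rewrite mem_enum.
    exists (sg i); last by rewrite sgE.
    by rewrite mem_enum; apply: imset_f; rewrite mem_enum in iS.
  have tbF : forall S, tb (F S) = tb S.
    move=> S; rewrite /tb -(pb_eq (transphi (el S))); apply: pb_eq.
    by split; apply: trans_eq => x; rewrite elF.
  have cF : forall S, #|F S| = #|S| by move=> S; rewrite card_imset.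
  have [G FG GF] := injF_bij FI.
  have MF : forall S, (F S \in Mset) = (S \in Mset).
    by move=> S; rewrite !inE tbF cF.
  have dphi : forall x, d (phi x) = d x.
    move=> x; rewrite /d -(card_preimset _ FI); apply: eq_card => S.
    by rewrite !inE tbF cF elF mem_map.
  move=> x; rewrite !mem_filter Uphi dphi.
  by [].
Qed.
End Main.


Definition ceq (A : Type) (x y : A) := pb (x = y).
Lemma ceqP (A : Type) : Equality.axiom (@ceq A).
Proof. by move=> x y; apply: pbP. Qed.
Definition cT (A : Type) : Type := A.
HB.instance Definition _ (A : Type) := hasDecEq.Build (cT A) (@ceqP A).

Lemma InE (A : eqType) (x : A) s : List.In x s <-> x \in s.
Proof.
elim: s => [|a s IH] //=; rewrite inE; split.
  by case=> [->|/IH ->]; rewrite ?eqxx ?orbT.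
by case/orP => [/eqP ->|/IH]; [left|right].
Qed.

Lemma NoDup_uniq (A : eqType) (s : seq A) : List.NoDup s <-> uniq s.
Proof.
elim: s => [|a s IH] /=; first by split => // _; constructor.
split.
  by move=> h; inversion h; subst; apply/andP; split; [apply/negP => /InE | apply/IH].
by case/andP => /negP h1 /IH h2; constructor => // /InE.
Qed.

Section G.
Variables (G : graph) (K : fingraph).

Definition isoFG (VS : gV G -> Prop) (ES : gE G -> Prop) (f : fV K -> gV G) (g : fE K -> gE G) :=
    injective f /\ (forall v, VS (f v)) /\ (forall x, VS x -> exists v, f v = x) /\
    injective g /\ (forall e, ES (g e)) /\ (forall y, ES y -> exists e, g e = y) /\
    (forall e, gsrc (g e) = f (fsrc e) /\ gtgt (g e) = f (ftgt e)).

Lemma aut_inv (phi : gV G -> gV G) (psi : gE G -> gE G) : automorphism phi psi -> exists phi' psi',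
  [/\ automorphism phi' psi', cancel phi phi', cancel phi' phi, cancel psi psi' & cancel psi' psi].
Proof.
case=> [[phi' h1 h2] [[psi' h3 h4] h5]].
exists phi', psi'; split => //; split; [by exists phi | split; first by exists psi].
move=> e; have [s t] := h5 (psi' e); rewrite h4 in s t.
by rewrite s t !h1.
Qed.

Lemma transport (phi : gV G -> gV G) (psi : gE G -> gE G) VS ES f g : automorphism phi psi -> is_subgraph VS ES ->
  isoFG VS ES f g -> exists VS' ES', is_subgraph VS' ES' /\ isoFG VS' ES' (phi \o f) (psi \o g).
Proof.
move=> A; have [phi' [psi' [A' c1 c2 c3 c4]]] := aut_inv A.
case: A => [_ [_ Ah]].
move=> sub [fi [fV [fS [gi [gE [gS ge]]]]]].
exists (fun x => VS (phi' x)), (fun e => ES (psi' e)); split.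
  move=> e ESe; have [s t] := sub _ ESe.
  have [s' t'] := Ah (psi' e); rewrite c4 in s' t'.
  by rewrite s' t' !c1.
split; first by move=> u v /= /(can_inj c1) /fi.
split; first by move=> v /=; rewrite c1.
split; first by move=> x /fS [v fv]; exists v => /=; rewrite fv c2.
split; first by move=> u v /= /(can_inj c3) /gi.
split; first by move=> e /=; rewrite c3.
split; first by move=> y /gS [e ge']; exists e => /=; rewrite ge' c4.
move=> e /=; have [s t] := Ah (g e); have [s' t'] := ge e.
by rewrite s t s' t'.
Qed.

Definition PV (s : seq (cT (gV G))) := exists VS ES f g,
  [/\ is_subgraph VS ES, isoFG VS ES f g & s = map f (enum (fV K))].
Definition PE (s : seq (cT (gE G))) := exists VS ES f g,
  [/\ is_subgraph VS ES, isoFG VS ES f g & s = map g (enum (fE K))].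

Lemma PV_map (phi : gV G -> gV G) (psi : gE G -> gE G) s : automorphism phi psi -> PV s -> PV (map phi s).
Proof.
move=> A [VS [ES [f [g [sub iso ->]]]]].
have [VS' [ES' [sub' iso']]] := transport A sub iso.
by exists VS', ES', (phi \o f), (psi \o g); split => //; rewrite map_comp.
Qed.

Lemma PE_map (phi : gV G -> gV G) (psi : gE G -> gE G) s : automorphism phi psi -> PE s -> PE (map psi s).
Proof.
move=> A [VS [ES [f [g [sub iso ->]]]]].
have [VS' [ES' [sub' iso']]] := transport A sub iso.
by exists VS', ES', (phi \o f), (psi \o g); split => //; rewrite map_comp.
Qed.

Lemma PV_iff (phi : gV G -> gV G) (psi : gE G -> gE G) s : automorphism phi psi -> PV (map phi s) <-> PV s.
Proof.
move=> A; split; last exact: PV_map A.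
have [phi' [psi' [A' c1 _ _ _]]] := aut_inv A.
by move/(PV_map A'); rewrite -map_comp (eq_map c1) map_id.
Qed.

Lemma PE_iff (phi : gV G -> gV G) (psi : gE G -> gE G) s : automorphism phi psi -> PE (map psi s) <-> PE s.
Proof.
move=> A; split; last exact: PE_map A.
have [phi' [psi' [A' _ _ c1 _]]] := aut_inv A.
by move/(PE_map A'); rewrite -map_comp (eq_map c1) map_id.
Qed.

Lemma hitV (X : seq (cT (gV G))) : vertex_hitting K X <-> trans PV X.
Proof.
split.
  move=> h e [VS [ES [f [g [sub iso ->]]]]].
  have [x [xX VSx]] := h VS ES sub (ex_intro _ f (ex_intro _ g iso)).
  have [v fv] := iso.2.2.1 x VSx.
  by exists x; [exact: (proj1 (@InE (cT _) x X) xX) | rewrite -fv map_f ?mem_enum].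
move=> h VS ES sub [f [g iso]].
have [x xX /mapP [v _ xv]] := h (map f (enum (fV K))) (ex_intro _ VS (ex_intro _ ES
   (ex_intro _ f (ex_intro _ g (And3 sub iso erefl))))).
rewrite xv in xX; by exists (f v); split; [exact: (proj2 (@InE (cT _) _ X) xX) | exact: iso.2.1].
Qed.

Lemma hitE (X : seq (cT (gE G))) : edge_hitting K X <-> trans PE X.
Proof.
split.
  move=> h e [VS [ES [f [g [sub iso ->]]]]].
  have [x [xX ESx]] := h VS ES sub (ex_intro _ f (ex_intro _ g iso)).
  have [v fv] := iso.2.2.2.2.2.1 x ESx.
  by exists x; [exact: (proj1 (@InE (cT _) x X) xX) | rewrite -fv map_f ?mem_enum].
move=> h VS ES sub [f [g iso]].
have [x xX /mapP [v _ xv]] := h (map g (enum (fE K))) (ex_intro _ VS (ex_intro _ ES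
   (ex_intro _ f (ex_intro _ g (And3 sub iso erefl))))).
rewrite xv in xX; by exists (g v); split; [exact: (proj2 (@InE (cT _) _ X) xX) | exact: iso.2.2.2.2.1].
Qed.

Lemma PV_size s : PV s -> size s <= #|fV K|.
Proof. by case=> [VS [ES [f [g [_ _ ->]]]]]; rewrite size_map cardE. Qed.
Lemma PE_size s : PE s -> size s <= #|fE K|.
Proof. by case=> [VS [ES [f [g [_ _ ->]]]]]; rewrite size_map cardE. Qed.

End G.

Theorem corollary1 (G : graph) (K : fingraph) :
  (forall X : seq (gV G), List.NoDup X -> vertex_hitting K X ->
     exists Y : seq (gV G),
       [/\ List.NoDup Y, vertex_aut_invariant Y, vertex_hitting K Y &
           size Y <= size X * #|fV K|]) /\
  (forall X : seq (gE G), List.NoDup X -> edge_hitting K X ->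
     exists Y : seq (gE G),
       [/\ List.NoDup Y, edge_aut_invariant Y, edge_hitting K Y &
           size Y <= size X * #|fE K|]).
Proof.
split.
  move=> X /(NoDup_uniq (X : seq (cT (gV G)))) uX /(@hitV G K X) tX.
  have [Y [uY tY sY inv]] := @main (cT (gV G)) (@PV G K) #|fV K| X
    (@PV_size G K) uX tX.
  exists Y; split.
  - exact/(NoDup_uniq (Y : seq (cT (gV G)))).
  - move=> phi psi A x.
    have [[phi' c1 c2] _] := A.
    have h := inv phi (can_inj c1) (fun s => @PV_iff G K phi psi s A) (ex_intro _ phi' c2) x.
    split => /(proj1 (@InE (cT (gV G)) _ Y)) H; apply: (proj2 (@InE (cT (gV G)) _ Y)).
      exact: (proj1 h H).
    exact: (proj2 h H).
  - exact/(@hitV G K Y).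
  - exact: sY.
move=> X /(NoDup_uniq (X : seq (cT (gE G)))) uX /(@hitE G K X) tX.
have [Y [uY tY sY inv]] := @main (cT (gE G)) (@PE G K) #|fE K| X
  (@PE_size G K) uX tX.
exists Y; split.
- exact/(NoDup_uniq (Y : seq (cT (gE G)))).
- move=> phi psi A x.
  have [_ [[psi' c1 c2] _]] := A.
  have h := inv psi (can_inj c1) (fun s => @PE_iff G K phi psi s A) (ex_intro _ psi' c2) x.
  split => /(proj1 (@InE (cT (gE G)) _ Y)) H; apply: (proj2 (@InE (cT (gE G)) _ Y)).
    exact: (proj1 h H).
  exact: (proj2 h H).
- exact/(@hitE G K Y).
- exact: sY.
Qed.
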